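(* Let $R$ be an arithmetic ring such that $\mathrm{Minspec}(R)$ is compact in the Zariski topology and every finitely generated $R$-module has a pure-composition series with indecomposable cyclic factors. Then $\mathrm{Minspec}(R)$ is finite.
   Context: All rings are commutative with identity. $R$ is arithmetic if $R_P$ is a valuation ring for every maximal ideal $P$. $\mathrm{Minspec}(R)$ is the set of minimal prime ideals of $R$ with the Zariski topology. A pure-composition series of $M$ is a finite chain $\{0\}=M_0\subset\dots\subset M_n=M$ of pure submodules (inclusion stays injective after tensoring with any module). *)

(* Defs.v *)
From mathcomp Require Import all_boot all_order all_algebra.
From Stdlib Require List.
Set Implicit Arguments. Unset Strict Implicit. Unset Printing Implicit Defensive.
Import GRing.Theory.
Local Open Scope ring_scope.

Section RingDefs.
Variable R : comPzRingType.

Definition ideal (I : R -> Prop) : Prop :=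
  [/\ I 0, (forall x y, I x -> I y -> I (x + y)) & (forall r x, I x -> I (r * x))].

Definition prime_ideal (P : R -> Prop) : Prop :=
  [/\ ideal P, ~ P 1 & (forall a b, P (a * b) -> P a \/ P b)].

Definition maximal_ideal (P : R -> Prop) : Prop :=
  [/\ ideal P, ~ P 1 &
      (forall J, ideal J -> ~ J 1 -> (forall x, P x -> J x) -> forall x, J x -> P x)].

Definition minimal_prime (P : R -> Prop) : Prop :=
  prime_ideal P /\
  (forall Q, prime_ideal Q -> (forall x, Q x -> P x) -> forall x, P x -> Q x).

(* R_P is a valuation ring (any two elements are comparable for divisibility),
   written out in terms of R: a/1 | b/1 or b/1 | a/1 in R_P. *)
Definition localization_is_valuation (P : R -> Prop) : Prop :=
  forall a b : R, exists s c : R, ~ P s /\ (s * b = c * a \/ s * a = c * b).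

Definition arithmetic_ring : Prop :=
  forall P, maximal_ideal P -> localization_is_valuation P.

(* Zariski topology on Minspec(R): the open sets are the traces on Minspec(R)
   of the open sets D(S) = {P | S not contained in P} of Spec(R). *)
Definition minspec_open_D (S : R -> Prop) (P : R -> Prop) : Prop :=
  exists s, S s /\ ~ P s.

Definition minspec_compact : Prop :=
  forall (I : Type) (S : I -> R -> Prop),
    (forall P, minimal_prime P -> exists i, minspec_open_D (S i) P) ->
    exists F : seq I, forall P, minimal_prime P ->
      exists2 i, List.In i F & minspec_open_D (S i) P.

Definition minspec_finite : Prop :=
  exists F : seq (R -> Prop), forall P, minimal_prime P ->
    exists2 Q, List.In Q F & (forall x, P x <-> Q x).

End RingDefs.

Section ModuleDefs.
Variable R : comPzRingType.

Definition submodule (M : lmodType R) (N : M -> Prop) : Prop :=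
  [/\ N 0, (forall x y, N x -> N y -> N (x + y)) & (forall (r : R) x, N x -> N (r *: x))].

Definition fin_generated (M : lmodType R) : Prop :=
  exists n (g : 'I_n -> M), forall m : M, exists c : 'I_n -> R,
    m = \sum_(i < n) c i *: g i.

Definition bilinear_on (M X Y : lmodType R) (N : M -> Prop) (beta : M -> X -> Y) : Prop :=
  [/\ (forall n n' x, N n -> N n' -> beta (n + n') x = beta n x + beta n' x),
      (forall (r : R) n x, N n -> beta (r *: n) x = r *: beta n x),
      (forall n x x', N n -> beta n (x + x') = beta n x + beta n x') &
      (forall (r : R) n x, N n -> beta n (r *: x) = r *: beta n x)].

(* The element \sum_i n_i (x) x_i of N (x)_R X is zero, expressed through the
   universal property of the tensor product: every bilinear map on N x X kills it. *)
Definition tensor_zero (M X : lmodType R) (N : M -> Prop) (s : seq (M * X)) : Prop :=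
  forall (Y : lmodType R) (beta : M -> X -> Y), bilinear_on N beta ->
    \sum_(p <- s) beta p.1 p.2 = 0.

(* N is a pure submodule of M: N (x) X -> M (x) X is injective for every X. *)
Definition pure_submodule (M : lmodType R) (N : M -> Prop) : Prop :=
  submodule N /\
  forall (X : lmodType R) (s : seq (M * X)),
    (forall p, List.In p s -> N p.1) ->
    tensor_zero (fun _ => True) s -> tensor_zero N s.

Definition cyclic_factor (M : lmodType R) (A B : M -> Prop) : Prop :=
  exists m, B m /\ forall x, B x <-> exists a (r : R), A a /\ x = a + r *: m.

(* The factor B/A is indecomposable: nonzero, and not the direct sum of two
   nonzero submodules (via the correspondence theorem: no submodules C, D with
   A <= C, D <= B, C + D = B, C /\ D = A, C <> A, D <> A). *)
Definition indecomposable_factor (M : lmodType R) (A B : M -> Prop) : Prop :=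
  (exists x, B x /\ ~ A x) /\
  ~ (exists C D : M -> Prop,
       submodule C /\ submodule D /\
       ((forall x, A x -> C x) /\ (forall x, A x -> D x)) /\
       ((forall x, C x -> B x) /\ (forall x, D x -> B x)) /\
       (forall x, B x <-> exists c d, C c /\ D d /\ x = c + d) /\
       (forall x, C x /\ D x <-> A x) /\
       (exists x, C x /\ ~ A x) /\ (exists x, D x /\ ~ A x)).

Definition has_pure_indec_cyclic_series (M : lmodType R) : Prop :=
  exists (n : nat) (Ms : nat -> M -> Prop),
    [/\ (forall x, Ms 0%N x <-> x = 0),
        (forall x, Ms n x),
        (forall i, (i <= n)%N -> pure_submodule (Ms i)),
        (forall i, (i < n)%N ->
           (forall x, Ms i x -> Ms i.+1 x) /\ (exists x, Ms i.+1 x /\ ~ Ms i x)) &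
        (forall i, (i < n)%N ->
           cyclic_factor (Ms i) (Ms i.+1) /\ indecomposable_factor (Ms i) (Ms i.+1))].

End ModuleDefs.

(* Main.v *)
Require Import Defs.
From mathcomp Require Import all_boot all_order all_algebra.
From mathcomp Require Import classical_sets.
From mathcomp Require Import ring.
From Stdlib Require Import Classical ClassicalEpsilon.
From Stdlib Require List.
Import GRing.Theory.
Local Open Scope ring_scope.
Set Implicit Arguments. Unset Strict Implicit.

Section Alg.
Variable R : comPzRingType.

Lemma exists_max (J : R -> Prop) : ideal J -> ~ J 1 ->
  exists P, maximal_ideal P /\ forall x, J x -> P x.
Proof.
move=> [J0 JD JM] J1.
pose PP := fun I : set R => I = set0 \/ (ideal I /\ ~ I 1 /\ forall x, J x -> I x).
have [A [PA Amax]] : exists A : set R, PP A /\ (forall B : set R, (A `<` B)%classic -> ~ PP B).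
  apply: Zorn_bigcup => F FP Ftot.
  case: (classic (exists X, F X /\ X <> set0)) => [[X0 [FX0 X0n]]|allz]; last first.
    left; apply/seteqP; split => x //= [X FX Xx].
    apply: allz; exists X; split => //; move=> E; by rewrite E in Xx.
  have idF : forall X, F X -> (exists x, X x) -> ideal X /\ ~ X 1 /\ (forall x, J x -> X x).
    move=> X FX [x Xx]; case: (FP X FX) => // E; by rewrite E in Xx.
  have [iX0 [X01 JX0]] : ideal X0 /\ ~ X0 1 /\ (forall x, J x -> X0 x).
    case: (FP X0 FX0) => //.
  right; split; [split|split].
  - exists X0; [exact: FX0|]; by case: iX0.
  - move=> x y [X FX Xx] [Y FY Yy].
    have [iX _] := idF X FX (ex_intro _ x Xx).
    have [iY _] := idF Y FY (ex_intro _ y Yy).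
    case: (Ftot X Y FX FY) => [XY|YX].
    + exists Y => //; case: iY => _ H _; apply: H => //; exact: XY.
    + exists X => //; case: iX => _ H _; apply: H => //; exact: YX.
  - move=> r x [X FX Xx]; have [iX _] := idF X FX (ex_intro _ x Xx).
    exists X => //; case: iX => _ _ H; exact: H.
  - move=> [X FX X1]; have [_ [H _]] := idF X FX (ex_intro _ 1 X1); exact: H.
  - move=> x Jx; exists X0 => //; exact: JX0.
case: PA => [A0|[iA [A1 JA]]].
  have AJ : (A `<` J)%classic.
    rewrite A0; split; first by [].
    move=> H; exact: (H 0 J0).
  exfalso; apply: (Amax J AJ); right; split; first by split.
  by split.
exists A; split => //; split; [exact: iA|exact: A1|].
move=> I iI I1 AI x Ix.
apply: NNPP => nAx.
have AI' : (A `<` I)%classic.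
  by split; [exact: AI| move=> H; apply: nAx; exact: H].
apply: (Amax I AI'); right; split => //; split => // y Jy; exact: AI _ (JA _ Jy).
Qed.

Lemma one_of (J : R -> Prop) : ideal J ->
  (forall P, maximal_ideal P -> exists x, J x /\ ~ P x) -> J 1.
Proof.
move=> iJ H; apply: NNPP => J1.
have [P [mP JP]] := exists_max iJ J1.
have [x [Jx Px]] := H P mP; exact: Px (JP x Jx).
Qed.

Lemma prime_mulR (P : R -> Prop) a b : prime_ideal P -> P (a * b) -> ~ P b -> P a.
Proof. by move=> [_ _ H] /H [] // . Qed.

Lemma prime_nmul (P : R -> Prop) a b : prime_ideal P -> ~ P a -> ~ P b -> ~ P (a * b).
Proof. by move=> [_ _ H] na nb /H []. Qed.

Lemma prime_npow (P : R -> Prop) a k : prime_ideal P -> ~ P a -> ~ P (a ^+ k).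
Proof.
move=> pP na; elim: k => [|k IH]; first by rewrite expr0; case: pP.
by rewrite exprS; apply: prime_nmul.
Qed.

Lemma prime_pow (P : R -> Prop) a k : prime_ideal P -> P (a ^+ k) -> P a.
Proof. by move=> pP H; apply: NNPP => na; exact: (prime_npow pP na H). Qed.

Lemma ideal_mulr (P : R -> Prop) a b : ideal P -> P a -> P (a * b).
Proof. by move=> [_ _ H] Pa; rewrite mulrC; apply: H. Qed.

Lemma ideal_mull (P : R -> Prop) a b : ideal P -> P b -> P (a * b).
Proof. by move=> [_ _ H] Pa; apply: H. Qed.

Lemma max_prime (P : R -> Prop) : maximal_ideal P -> prime_ideal P.
Proof.
move=> [iP P1 Pm]; split => // a b Pab.
case: (classic (P a)) => Pa; [by left| right].
pose J := fun z => exists p r, P p /\ z = p + r * a.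
have iJ : ideal J.
  case: iP => P0 PD PM; split.
  - by exists 0, 0; rewrite mul0r addr0.
  - move=> x y [p [r [Pp ->]]] [p' [r' [Pp' ->]]]; exists (p + p'), (r + r'); split.
      exact: PD.
    by rewrite mulrDl; ring.
  - move=> r x [p [r' [Pp ->]]]; exists (r * p), (r * r'); split; first exact: PM.
    by ring.
have J1 : J 1.
  apply: NNPP => nJ1; apply: Pa.
  have PJ : forall x, P x -> J x by move=> x Px; exists x, 0; split => //; rewrite mul0r addr0.
  apply: (Pm J iJ nJ1 PJ).
  exists 0, 1; split; [by case: iP | by rewrite mul1r add0r].
have [p [r [Pp E]]] := J1.
have -> : b = p * b + r * (a * b) by rewrite mulrA -mulrDl -E mul1r.
have [_ PD _] := iP; apply: PD; [exact: ideal_mulr | exact: ideal_mull].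
Qed.

Definition Nid (P : R -> Prop) : R -> Prop :=
  fun x => exists s k, ~ P s /\ s * x ^+ k = 0.

Lemma Nid_prime (P : R -> Prop) : arithmetic_ring R -> maximal_ideal P -> prime_ideal (Nid P).
Proof.
move=> ar mP; have pP := max_prime mP; have val := ar P mP.
have P0 : P 0 by case: pP => [[]].
split; first split.
- by exists 1, 1%N; rewrite expr1 mulr0; split => //; case: pP.
- move=> x y [s [k [Ps Hs]]] [t [l [Pt Ht]]].
  have [u [c [Pu [E|E]]]] := val x y.
  + exists (s * u ^+ k), k; split; first by apply: prime_nmul => //; apply: prime_npow.
    have -> : s * u ^+ k * (x + y) ^+ k = (s * x ^+ k) * (u + c) ^+ k.
      by rewrite -mulrA -exprMn mulrDr E -mulrDl exprMn; ring.
    by rewrite Hs mul0r.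
  + exists (t * u ^+ l), l; split; first by apply: prime_nmul => //; apply: prime_npow.
    have -> : t * u ^+ l * (x + y) ^+ l = (t * y ^+ l) * (c + u) ^+ l.
      by rewrite -mulrA -exprMn mulrDr E -mulrDl exprMn; ring.
    by rewrite Ht mul0r.
- move=> r x [s [k [Ps Hs]]]; exists s, k; split => //.
  by rewrite exprMn mulrCA Hs mulr0.
- move=> [s [k [Ps Hs]]]; apply: Ps; by rewrite expr1n mulr1 in Hs; rewrite Hs.
- move=> a b [s [k [Ps Hs]]].
  have [u [c [Pu [E|E]]]] := val a b.
  + right; exists (s * u ^+ k), (k + k)%N; split; first by apply: prime_nmul => //; apply: prime_npow.
    have -> : s * u ^+ k * b ^+ (k + k) = (s * (a * b) ^+ k) * c ^+ k.
      rewrite exprD; transitivity (s * (u * b) ^+ k * b ^+ k); first by rewrite exprMn; ring.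
      by rewrite E !exprMn; ring.
    by rewrite Hs mul0r.
  + left; exists (s * u ^+ k), (k + k)%N; split; first by apply: prime_nmul => //; apply: prime_npow.
    have -> : s * u ^+ k * a ^+ (k + k) = (s * (a * b) ^+ k) * c ^+ k.
      rewrite exprD; transitivity (s * (u * a) ^+ k * a ^+ k); first by rewrite exprMn; ring.
      by rewrite E !exprMn; ring.
    by rewrite Hs mul0r.
Qed.

Lemma Nid_sub (P Q : R -> Prop) : prime_ideal Q -> (forall x, Q x -> P x) ->
  forall x, Nid P x -> Q x.
Proof.
move=> pQ QP x [s [k [Ps Hs]]].
have Q0 : Q 0 by case: pQ => [[]].
apply: (@prime_pow Q x k pQ); apply: (@prime_mulR Q _ s pQ); last by move/QP.
by rewrite mulrC Hs.
Qed.

Lemma Nid_min (P : R -> Prop) : arithmetic_ring R -> maximal_ideal P -> minimal_prime (Nid P).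
Proof.
move=> ar mP; split; first exact: Nid_prime.
move=> Q pQ QN; apply: Nid_sub => // x /QN; apply: Nid_sub; first exact: max_prime.
by [].
Qed.

Lemma min_eq_N (r : R -> Prop) : arithmetic_ring R -> minimal_prime r ->
  exists P, maximal_ideal P /\ (forall x, r x -> P x) /\ (forall x, r x <-> Nid P x).
Proof.
move=> ar [pr rmin]; have [ir r1 _] := pr.
have [P [mP rP]] := exists_max ir r1.
exists P; split => //; split => // x; split; last exact: Nid_sub.
exact: (rmin _ (Nid_prime ar mP) (Nid_sub pr rP)).
Qed.


Definition Kill (b : R) : R -> Prop := fun a => exists K, a * b ^+ K = 0.

Lemma kill_more (a b : R) K m : a * b ^+ K = 0 -> a * b ^+ (K + m) = 0.
Proof. by move=> H; rewrite exprD mulrA H mul0r. Qed.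

Lemma ideal_Kill b : ideal (Kill b).
Proof.
split.
- by exists 0%N; rewrite mul0r.
- move=> x y [K HK] [L HL]; exists (K + L)%N.
  rewrite mulrDl (kill_more L HK) addnC (kill_more K HL); exact: addr0.
- by move=> r x [K HK]; exists K; rewrite -mulrA HK mulr0.
Qed.

Lemma ideal_sum (X Y : R -> Prop) : ideal X -> ideal Y ->
  ideal (fun z => exists x y, X x /\ Y y /\ z = x + y).
Proof.
move=> [X0 XD XM] [Y0 YD YM]; split.
- by exists 0, 0; rewrite addr0.
- move=> _ _ [x [y [Xx [Yy ->]]]] [x' [y' [Xx' [Yy' ->]]]].
  exists (x + x'), (y + y'); split; first exact: XD.
  split; first exact: YD. by ring.
- move=> r _ [x [y [Xx [Yy ->]]]]; exists (r * x), (r * y); split; first exact: XM.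
  split; first exact: YM. by ring.
Qed.

Lemma pow_comax (u w : R) : u + w = 1 -> forall n, exists a b, u ^+ n * a + w * b = 1.
Proof.
move=> E; elim=> [|n [a [b H]]].
  by exists 1, 0; rewrite expr0 mulr1 mulr0 addr0.
exists a, (u ^+ n * a + b).
rewrite exprS; transitivity (u ^+ n * a * (u + w) + w * b); first by ring.
by rewrite E mulr1.
Qed.

Lemma separate (p q : R -> Prop) : arithmetic_ring R -> minspec_compact R ->
  minimal_prime p -> minimal_prime q -> ~ (forall x, p x <-> q x) ->
  exists e f : R, e + f = 1 /\ e * f = 0 /\ ~ p e /\ ~ q f.
Proof.
move=> ar cp mp mq neq.
have pp := mp.1; have pq := mq.1.
have [ip p1 _] := pp; have [iq q1 _] := pq.
pose J := fun z => exists a b, p a /\ q b /\ z = a + b.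
have iJ : ideal J := ideal_sum ip iq.
have J1 : J 1.
  apply: NNPP => nJ; have [P [mP JP]] := exists_max iJ nJ.
  have pP : forall x, p x -> P x.
    by move=> x px; apply: JP; exists x, 0; split => //; split; [by case: iq|by rewrite addr0].
  have qP : forall x, q x -> P x.
    by move=> x qx; apply: JP; exists 0, x; split; [by case: ip|split => //; rewrite add0r].
  have Np := Nid_sub pp pP; have Nq := Nid_sub pq qP.
  have pN := mp.2 _ (Nid_prime ar mP) Np; have qN := mq.2 _ (Nid_prime ar mP) Nq.
  apply: neq => x; split => H; [exact: Nq (pN _ H) | exact: Np (qN _ H)].
have [s [t [ps [qt E1]]]] := J1.
have nqs : ~ q s.
  move=> qs; apply: q1; rewrite E1; by case: iq => _ D _; apply: D.
pose S := fun y : R => fun z : R => z = y /\ (y = s \/ exists k, y * s ^+ k = 0).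
have cov : forall r, minimal_prime r -> exists y, minspec_open_D (S y) r.
  move=> r mr; case: (classic (r s)) => rs.
  - have [P [mP [rP rN]]] := min_eq_N ar mr.
    have [sg [k [Psg Hsg]]] := (rN s).1 rs.
    exists sg, sg; split; [split; [done| right; exists k; done] | by move/rP].
  - by exists s, s; split => //; split; [done|left].
have [F HF] := cp R S cov.
pose goodk v := exists k, v * s ^+ k = 0.
have HF' : forall r, minimal_prime r -> r s -> exists v, List.In v F /\ goodk v /\ ~ r v.
  move=> r mr rs; have [y inF [z [[zy [ys|gy]] nz]]] := HF r mr.
    by subst; contradiction.
  by exists y; subst.
pose X := Kill s.
pose Y := fun y => exists L, forall v, List.In v F -> goodk v -> y * v ^+ L = 0.
have iX : ideal X := ideal_Kill s.
have iY : ideal Y.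
  split.
  - by exists 0%N => v _ _; rewrite mul0r.
  - move=> x y [K HK] [L HL]; exists (K + L)%N => v iv gv.
    rewrite mulrDl (kill_more L (HK v iv gv)) addnC (kill_more K (HL v iv gv)); exact: addr0.
  - by move=> r x [K HK]; exists K => v iv gv; rewrite -mulrA HK // mulr0.
have key : forall P, maximal_ideal P ->
    (exists z, (X z \/ Y z) /\ ~ P z) /\ (forall x y, X x -> Y y -> Nid P (x * y)).
  move=> P mP; have pN := Nid_prime ar mP; have mN := Nid_min ar mP.
  have [iN N1 _] := pN.
  have P1 : ~ P 1 by case: mP.
  case: (classic (Nid P s)) => Ns.
  - have [v [inv [[k gv] nv]]] := HF' _ mN Ns.
    have [u [c [Pu [E|E]]]] := ar P mP (s ^+ k) v.
    + exfalso; apply: nv; exists u, 2%N; split => //.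
      by rewrite expr2 mulrA E -mulrA (mulrC (s ^+ k) v) gv mulr0.
    + split.
        exists u; split => //; left; exists (k + k)%N.
        by rewrite exprD mulrA E -mulrA gv mulr0.
      move=> x y _ [L HL]; apply: ideal_mull => //.
      apply: (prime_mulR pN (b := v ^+ L)); first by rewrite HL; [case: iN| exact: inv | exists k].
      exact: prime_npow.
  - have allN : forall v, List.In v F -> goodk v -> Nid P v.
      move=> v _ [k gv]; apply: (prime_mulR pN (b := s ^+ k)); first by rewrite gv; case: iN.
      exact: prime_npow.
    have lst : forall l : seq R, (forall v, List.In v l -> goodk v -> Nid P v) ->
        exists sg L, ~ P sg /\ forall v, List.In v l -> goodk v -> sg * v ^+ L = 0.
      elim=> [|v l IH] Hl.
        by exists 1, 0%N; split.
      have [sg [L [Psg HL]]] := IH (fun w iw => Hl w (or_intror iw)).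
      case: (classic (goodk v)) => gv.
        have [tau [k [Ptau Htau]]] := Hl v (or_introl erefl) gv.
        exists (sg * tau), (L + k)%N; split; first by apply: prime_nmul => //; exact: max_prime.
        move=> w [<-|iw] gw.
          by rewrite exprD mulrACA Htau mulr0.
        by rewrite exprD mulrACA HL // mul0r.
      exists sg, L; split => // w [<-|iw] gw //; exact: HL.
    have [sg [L [Psg HL]]] := lst F allN.
    split; first by exists sg; split => //; right; exists L.
    move=> x y [K HK] _; apply: ideal_mulr => //.
    apply: (prime_mulR pN (b := s ^+ K)); first by rewrite HK; case: iN.
    exact: prime_npow.
pose XY := fun z => exists x y, X x /\ Y y /\ z = x + y.
have iXY : ideal XY := ideal_sum iX iY.
have XY1 : XY 1.
  apply: one_of => // P mP; have [[z [[Xz|Yz] Pz]] _] := key P mP.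
    exists z; split => //; exists z, 0; split => //; split; [by case: iY|by rewrite addr0].
  exists z; split => //; exists 0, z; split; [by case: iX|split => //; by rewrite add0r].
have [x [y [Xx [Yy Exy]]]] := XY1.
have Z1 : Kill (x * y) 1.
  apply: one_of; first exact: ideal_Kill.
  move=> P mP; have [_ H] := key P mP.
  have [sg [k [Psg Hsg]]] := H x y Xx Yy.
  by exists sg; split => //; exists k.
have [m Hm] := Z1; rewrite mul1r in Hm.
have Hm1 : (x * y) ^+ m.+1 = 0 by rewrite exprS Hm mulr0.
have [a [b Hab]] := pow_comax (esym Exy) m.+1.
have Hab2 : y * b + x ^+ m.+1 * a = 1 by rewrite addrC.
have [a' [b' Hab']] := @pow_comax (y * b) (x ^+ m.+1 * a) Hab2 m.+1.
exists (x ^+ m.+1 * a * b'), ((y * b) ^+ m.+1 * a'); split.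
  by rewrite addrC.
split.
  have -> : x ^+ m.+1 * a * b' * ((y * b) ^+ m.+1 * a') =
            (x * y) ^+ m.+1 * (a * b' * b ^+ m.+1 * a') by rewrite !exprMn; ring.
  by rewrite Hm1 mul0r.
split.
- move=> pe; apply: p1.
  have [v [inv [gv nv]]] := HF' _ mp ps.
  have [L HL] := Yy.
  have py : p y.
    apply: (prime_mulR pp (b := v ^+ L)); first by rewrite HL //; case: ip.
    exact: prime_npow.
  have pf : p ((y * b) ^+ m.+1 * a').
    rewrite exprS -mulrA -mulrA; apply: ideal_mulr => //.
  rewrite -Hab'; have [_ D _] := ip; rewrite addrC; exact: D.
- move=> qf; apply: q1.
  have [K HK] := Xx.
  have qx : q x.
    apply: (prime_mulR pq (b := s ^+ K)); first by rewrite HK; case: iq.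
    exact: prime_npow.
  have qe : q (x ^+ m.+1 * a * b').
    rewrite exprS -mulrA -mulrA; apply: ideal_mulr => //.
  rewrite -Hab'; have [_ D _] := iq; rewrite addrC; exact: D.
Qed.

End Alg.


Theorem proposition2p9 (R : comPzRingType) :
  arithmetic_ring R ->
  minspec_compact R ->
  (forall M : lmodType R, fin_generated M -> has_pure_indec_cyclic_series M) ->
  minspec_finite R.
Proof.
move=> ar cp H.
have fg : fin_generated (R^o : lmodType R).
  exists 1%N, (fun _ => 1) => m; exists (fun _ => m).
  by rewrite big_ord1; change (m = m * 1); rewrite mulr1.
have [n [Ms [H0 Hn Hpure Hinc Hfac]]] := H _ fg.
pose idx (r : R -> Prop) i := (i < n)%N /\ (forall x, Ms i x -> r x) /\
                               ~ (forall x, Ms i.+1 x -> r x).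
have exidx : forall r, minimal_prime r -> exists i, idx r i.
  move=> r mr; apply: NNPP => nex.
  have [[[r0 _ _] r1 _] _] := mr.
  have all : forall i, (i <= n)%N -> forall x, Ms i x -> r x.
    elim=> [|i IH] Hi.
      by move=> x /H0 ->.
    apply: NNPP => nH; apply: nex; exists i; split => //; split => //.
    exact: IH (ltnW Hi).
  by apply: r1; apply: (all n (leqnn n)); apply: Hn.
have uniq : forall p q i, minimal_prime p -> minimal_prime q -> idx p i -> idx q i ->
    forall x, p x <-> q x.
  move=> p q i mp mq [ilt [Ap Bp]] [_ [Aq Bq]]; apply: NNPP => neq.
  have [e [f [Eef [Eef0 [pe qf]]]]] := separate ar cp mp mq neq.
  have [[A0 AD AZ] _] := Hpure i (ltnW ilt).
  have [[B0 BD BZ] _] := Hpure i.+1 ilt.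
  have AB := (Hinc i ilt).1.
  have [_ ind] := (Hfac i ilt).2; apply: ind.
  have [[[p0 _ _] _ _] _] := mp.
  have [[[q0 _ _] _ _] _] := mq.
  have [pprime qprime] := (mp.1, mq.1).
  have [bp [Bbp nbp]] : exists b, Ms i.+1 b /\ ~ p b.
    apply: NNPP => nex; apply: Bp => x Bx; apply: NNPP => px; apply: nex; by exists x.
  have [bq [Bbq nbq]] : exists b, Ms i.+1 b /\ ~ q b.
    apply: NNPP => nex; apply: Bq => x Bx; apply: NNPP => qx; apply: nex; by exists x.
  have sub : forall g : R, submodule (M := R^o)
      (fun z : R => exists a b, Ms i a /\ Ms i.+1 b /\ z = a + g * b).
    move=> g; split.
    - by exists 0, 0; split => //; split => //; rewrite mulr0 addr0.
    - move=> _ _ [a [b [Aa [Bb ->]]]] [a' [b' [Aa' [Bb' ->]]]].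
      exists (a + a'), (b + b'); split; first exact: AD.
      split; first exact: BD. by ring.
    - move=> r _ [a [b [Aa [Bb ->]]]]; exists (r * a), (r * b).
      split; first exact: (AZ r a Aa). split; first exact: (BZ r b Bb).
      by change (r * (a + g * b) = r * a + g * (r * b)); ring.
  have inC : forall g x, Ms i x -> exists a b, Ms i a /\ Ms i.+1 b /\ x = a + g * b.
    by move=> g x Ax; exists x, 0; split => //; split => //; rewrite mulr0 addr0.
  have CB : forall g x, (exists a b, Ms i a /\ Ms i.+1 b /\ x = a + g * b) -> Ms i.+1 x.
    by move=> g _ [a [b [Aa [Bb ->]]]]; apply: BD; [exact: AB| exact: (BZ g b Bb)].
  exists (fun z : R => exists a b, Ms i a /\ Ms i.+1 b /\ z = a + e * b).
  exists (fun z : R => exists a b, Ms i a /\ Ms i.+1 b /\ z = a + f * b).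
  split; first exact: sub.
  split; first exact: sub.
  split; first by split; apply: inC.
  split; first by split; apply: CB.
  split.
    move=> x; split.
      move=> Bx; exists (0 + e * x), (0 + f * x); split; first by exists 0, x.
      split; first by exists 0, x.
      by rewrite !add0r -mulrDl Eef mul1r.
    by move=> [c [d [Cc [Dd ->]]]]; apply: BD; [exact: CB Cc | exact: CB Dd].
  split.
    move=> x; split; last by move=> Ax; split; apply: inC.
    move=> [[a [b [Aa [Bb Ex]]]] [a' [b' [Aa' [Bb' Ex']]]]].
    have fx : f * x = f * a by rewrite Ex mulrDr mulrA (mulrC f e) Eef0 mul0r addr0.
    have ex : e * x = e * a' by rewrite Ex' mulrDr mulrA Eef0 mul0r addr0.
    have -> : x = e * x + f * x by rewrite -mulrDl Eef mul1r.
    rewrite fx ex; apply: AD; [exact: (AZ e a' Aa') | exact: (AZ f a Aa)].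
  split.
    exists (0 + e * bp); split; first by exists 0, bp.
    move=> /Ap; rewrite add0r => /(prime_mulR pprime).
    by move=> H1; apply: pe; apply: H1.
  exists (0 + f * bq); split; first by exists 0, bq.
  move=> /Aq; rewrite add0r => /(prime_mulR qprime).
  by move=> H1; apply: qf; apply: H1.
pose G := fun i => epsilon (inhabits (fun _ : R => False))
                       (fun r => minimal_prime r /\ idx r i).
exists (List.map G (List.seq 0 n)) => P mP.
have [i iP] := exidx P mP.
have [mQ iQ] : minimal_prime (G i) /\ idx (G i) i.
  exact: (epsilon_spec (inhabits (fun _ : R => False)) (fun r => minimal_prime r /\ idx r i) (ex_intro _ P (conj mP iP))).
exists (G i).
  apply: List.in_map; apply/List.in_seq; split; first by apply/leP.
  by apply/ltP; case: iP.
exact: uniq mP mQ iP iQ.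
Qed.
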